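(* Let $G=(V,E)$ be an infinite vertex-transitive simple graph of bounded degree, with cyclic connective constant $\mu_G$. Let $\alpha_0$ be the unique solution of the equation $$\alpha + \tfrac12 \log\big(1 + e^{-2\alpha}\big) = \log \mu_G .$$ Then for all $\alpha > \alpha_0$ there exist constants $C_0(\alpha), c_0(\alpha) > 0$ such that for every finite $U \subset V$, every $z \in U$ and every $\ell \in \mathbb N$, $$\mathbb{P}_{U}\big( \| \gamma_z \| > \ell \big) \leq C_0(\alpha) \exp\big( - c_0(\alpha)\, \ell \big).$$ Moreover, $C_0(\alpha)$ and $c_0(\alpha)$ can be chosen so that $\lim_{\alpha \to \infty} c_0(\alpha)/\alpha = 1$ and $\limsup_{\alpha \to \infty} C_0(\alpha) < \infty$.
   Context: For a finite simple graph with vertex set $U$ (here the subgraph of $G$ induced by $U$), a permutation on $U$ is a bijection $\pi:U\to U$ such that for every $x\in U$ either $\pi(x)=x$ or $\{x,\pi(x)\}$ is an edge. Let $\mathcal S_U$ be the set of such permutations, $\mathcal H_U(\pi)=\sum_{x\in U}\mathbb 1\{\pi(x)\neq x\}$, and for $\alpha\in\mathbb R$ let $\mathbb P_U(\pi)=e^{-\alpha\mathcal H_U(\pi)}/Z(U)$, where $Z(U)=\sum_{\pi\in\mathcal S_U}e^{-\alpha\mathcal H_U(\pi)}$. For $z\in U$, $\gamma_z(\pi)$ is the cycle of $\pi$ containing $z$, i.e. the directed graph with vertices $\{\pi^i(z):i\in\mathbb N\}$ and edges $(\pi^i(z),\pi^{i+1}(z))$; $\|\gamma_z\|$ is its number of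 edges (it is $0$ if $\pi(z)=z$). A cycle in $G$ is a finite directed subgraph with vertex set enumerated as $x^1,\dots,x^n$ and edge set $\{(x^i,x^{i+1}):1\le i\le n-1\}\cup\{(x^n,x^1)\}$. Fixing a vertex $0$ (origin), $SAP_n$ denotes the set of cycles in $G$ starting from $0$ with $n$ edges ($SAP_0=\{0\}$), and the cyclic connective constant is $\mu_G=\limsup_{n\to\infty}|SAP_n|^{1/n}$. *)

(* Defs.v *)
From HB Require Import structures.
From mathcomp Require Import all_boot all_order all_algebra all_fingroup.
From mathcomp Require Import finmap.
From mathcomp Require Import all_classical all_reals all_analysis.
Set Implicit Arguments. Unset Strict Implicit. Unset Printing Implicit Defensive.
Import Order.TTheory GRing.Theory Num.Theory.
Import numFieldNormedType.Exports.
Local Open Scope classical_set_scope.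
Local Open Scope ring_scope.

Definition simple_graph (V : choiceType) (adj : rel V) : Prop :=
  (forall x y, adj x y = adj y x) /\ (forall x, ~~ adj x x).

Definition infinite_graph (V : choiceType) : Prop := ~ finite_set [set: V].

Definition bounded_degree (V : choiceType) (adj : rel V) : Prop :=
  exists D : nat, forall x : V,
    exists s : seq V, (size s <= D)%N /\ (forall y, adj x y -> y \in s).

Definition vertex_transitive (V : choiceType) (adj : rel V) : Prop :=
  forall x y : V, exists f : V -> V,
    bijective f /\ (forall a b, adj (f a) (f b) = adj a b) /\ f x = y.

(* Self-avoiding polygons (cycles in G) from the origin o with n >= 1 edges,
   encoded by their enumeration x^1 = o, x^2, ..., x^n (distinct vertices,
   consecutive ones adjacent, x^n adjacent to x^1). *)
Definition SAP (V : choiceType) (adj : rel V) (o : V) (n : nat) : set (seq V) :=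
  [set s | size s = n /\ head o s = o /\ uniq s /\ path.cycle adj s].

Definition card_SAP (V : choiceType) (adj : rel V) (o : V) (n : nat) : nat :=
  if n == 0%N then 1%N else #|` fset_set (SAP adj o n)|%fset.

Definition mu_G (R : realType) (V : choiceType) (adj : rel V) (o : V) : R :=
  limn_sup (fun n : nat => ((card_SAP adj o n)%:R : R) `^ (n%:R^-1)).

Section Perms.
Variables (V : choiceType) (adj : rel V) (U : {fset V}).

Definition graph_perm (p : {perm U}) : bool :=
  [forall x : U, (p x == x) || adj (val x) (val (p x))].

Definition Hperm (p : {perm U}) : nat := #|[set x : U | p x != x]|.

(* ||gamma_z(pi)||: number of edges of the cycle of pi containing z *)
Definition cyc_len (p : {perm U}) (z : U) : nat :=
  if p z == z then 0%N else #|porbit p z|.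

Variable (R : realType).

Definition weight (alpha : R) (p : {perm U}) : R :=
  expR (- alpha * (Hperm p)%:R).

Definition Zpart (alpha : R) : R :=
  \sum_(p : {perm U} | graph_perm p) weight alpha p.

Definition prob_cyc_gt (alpha : R) (z : U) (l : nat) : R :=
  (\sum_(p : {perm U} | graph_perm p && (l < cyc_len p z)%N) weight alpha p)
    / Zpart alpha.
End Perms.

(* Main.v *)
Require Import Defs.
From HB Require Import structures.
From mathcomp Require Import all_boot all_order all_algebra all_fingroup.
From mathcomp Require Import finmap.
From mathcomp Require Import all_classical all_reals all_analysis.
From mathcomp Require Import zify ring lra.
Import Order.TTheory GRing.Theory Num.Theory.
Import numFieldNormedType.Exports.

Set Implicit Arguments. Unset Strict Implicit. Unset Printing Implicit Defensive.
Local Open Scope ring_scope.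
Definition partner (j : nat) : nat := if odd j then j.-1 else j.+1.
Lemma partner_lt j m : (j < m.*2)%N -> (partner j < m.*2)%N.
Proof. rewrite /partner; case: (boolP (odd j)) => oj; lia. Qed.
Lemma partner_half j : (partner j)./2 = j./2.
Proof. rewrite /partner; case: (boolP (odd j)) => oj; lia. Qed.
Lemma partnerK j : partner (partner j) = j.
Proof. rewrite /partner; case: (boolP (odd j)) => oj. 
have : ~~ odd j.-1 by lia. move/negbTE => ->; lia.
have : odd j.+1 by lia. move=> ->; lia. Qed.
Lemma partner_neq j : partner j != j.
Proof. rewrite /partner; case: (boolP (odd j)) => oj; lia. Qed.

Lemma sum_inj_le (R : realType) (I J : finType) (P : pred I) (Qj : pred J) (h : I -> J) (F : J -> R) :
  (forall j, 0 <= F j) -> {in P &, injective h} -> (forall i, P i -> Qj (h i)) ->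
  \sum_(i | P i) F (h i) <= \sum_(j | Qj j) F j.
Proof.
move=> F0 hinj hQ.
rewrite -(big_imset F hinj) [X in _ <= X](bigID (mem (h @: P))) /=.
rewrite -[X in X <= _]addr0 lerD ?sumr_ge0 //.
rewrite le_eqVlt; apply/orP; left; apply/eqP.
apply: eq_bigl => j; apply/idP/idP => [hj|/andP [_ ->//]].
rewrite hj andbT; case/imsetP: hj => i Pi ->; exact: hQ.
Qed.

Lemma double_sum (g : nat -> bool) m :
  (\sum_(0 <= j < m.*2) (g j./2 : nat))%N = (\sum_(0 <= i < m) (g i : nat)).*2.
Proof.
elim: m => [|m IH]; first by rewrite !big_geq.
rewrite doubleS big_nat_recr // big_nat_recr // big_nat_recr // IH.
have -> : (m.*2)./2 = m by lia.
have -> : (m.*2).+1./2 = m by lia.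
by rewrite doubleD -(addnn (g m)) addnA.
Qed.

Lemma HpermE (V : choiceType) (U : {fset V}) (q : {perm U}) : Hperm q = #|[set x | q x != x]|.
Proof. rewrite /Hperm. apply: (@eq_card _ _ _) => x. rewrite !inE. by apply/idP/idP; rewrite in_setE. Qed.

Section Comb.
Variables (V : choiceType) (adj : rel V) (U : {fset V}).
Hypothesis adj_sym : forall x y, adj x y = adj y x.
Variables (z : U) (t : seq U).
Hypothesis t_uniq : uniq t.
Variable n : nat.
Hypothesis sizet : size t = n.
Hypothesis t_size : (2 <= n)%N.
Local Notation k := (n./2).

Lemma idx_mem y : (index y t < n)%N = (y \in t).
Proof. by rewrite -sizet index_mem. Qed.
Lemma mem_nth' j : (j < n)%N -> nth z t j \in t.
Proof. by rewrite -sizet; apply: mem_nth. Qed.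
Lemma nth_uniq' i j : (i < n)%N -> (j < n)%N -> (nth z t i == nth z t j) = (i == j).
Proof. by rewrite -sizet => ??; apply: nth_uniq. Qed.
Lemma index_uniq' j : (j < n)%N -> index (nth z t j) t = j.
Proof. by rewrite -sizet => ?; apply: index_uniq. Qed.

Lemma k2n : (k.*2 <= n)%N. Proof. lia. Qed.

Definition sc j := if j.+1 == n then 0%N else j.+1.
Lemma sc_lt j : (j < n)%N -> (sc j < n)%N.
Proof. move: t_size; rewrite /sc; case: ifP => /eqP; lia. Qed.
Lemma sc_neq j : (j < n)%N -> sc j != j.
Proof. move: t_size; rewrite /sc; case: ifP => /eqP; lia. Qed.

Definition Qb (p : {perm U}) := graph_perm adj p &&
  [forall j : 'I_n, p (nth z t j) == nth z t (sc j)].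

Lemma QbS p j : Qb p -> (j < n)%N -> p (nth z t j) = nth z t (sc j).
Proof. move=> /andP [_ /forallP H] jn. exact: (eqP (H (Ordinal jn))). Qed.

Lemma nth_inj i j : (i < n)%N -> (j < n)%N -> nth z t i = nth z t j -> i = j.
Proof. move=> ??; move/eqP; rewrite nth_uniq' //; by move/eqP. Qed.

Lemma Qb_in p y : Qb p -> (p y \in t) = (y \in t).
Proof.
move=> Hq; apply/idP/idP => Hy; last first.
  rewrite -(nth_index z Hy) QbS //; first by apply: mem_nth'; apply: sc_lt; rewrite idx_mem.
  by rewrite idx_mem.
set j := index (p y) t.
have jn : (j < n)%N by rewrite idx_mem.
pose i := if j == 0%N then n.-1 else j.-1.
have i_n : (i < n)%N by rewrite /i; case: (boolP (j == 0%N)) => Hj /=; lia.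
have sci : sc i = j by rewrite /sc /i; case: (boolP (j == 0%N)) => Hj /=; case: eqP => Hn; lia.
have : p (nth z t i) = p y by rewrite QbS // sci nth_index.
by move/perm_inj <-; apply: mem_nth'.
Qed.

Lemma Qb_adj p j : Qb p -> (j < n)%N -> adj (val (nth z t j)) (val (nth z t (sc j))).
Proof.
move=> Hq jn; case/andP: (Hq) => /forallP /(_ (nth z t j)) + _.
rewrite QbS // => /orP [|//].
by rewrite nth_uniq' // ?sc_lt // (negbTE (sc_neq jn)).
Qed.

Implicit Type f : {ffun 'I_k -> bool}.
Definition fn f i := [exists i' : 'I_k, (val i' == i) && f i'].
Definition cond f j := (j < k.*2)%N && fn f j./2.
Definition tau f y := if cond f (index y t) then nth z t (partner (index y t)) else y.

Lemma cond_lt f j : cond f j -> (j < n)%N.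
Proof. case/andP => H _; move: k2n; lia. Qed.

Lemma tau_out f y : y \notin t -> tau f y = y.
Proof. rewrite -idx_mem /tau /cond => H; case: ifP => // /andP [H2 _]; exfalso; move: k2n; lia. Qed.

Lemma tauK f y : tau f (tau f y) = y.
Proof.
rewrite {2}/tau; case: ifP => [c|c]; last by rewrite /tau c.
have jn := cond_lt c.
move: (c); rewrite /cond => /andP [j2 fj].
have pj := partner_lt j2.
have pn : (partner (index y t) < n)%N by move: k2n; lia.
rewrite /tau index_uniq' // /cond pj partner_half fj /= partnerK nth_index //.
by rewrite -idx_mem.
Qed.

Lemma tau_inj f : injective (tau f). Proof. exact: can_inj (tauK f). Qed.

Lemma tau_in f y : y \in t -> tau f y \in t.
Proof. rewrite /tau; case: ifP => // c _; apply: mem_nth'.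
move: (c); rewrite /cond => /andP [j2 _]; move: (partner_lt j2) k2n; lia. Qed.

Lemma tau_nth f j : (j < n)%N -> (tau f (nth z t j) != nth z t j) = cond f j.
Proof.
move=> jn; rewrite /tau index_uniq' //; case: ifP => c; last by rewrite eqxx.
have pn : (partner j < n)%N by move: c; rewrite /cond => /andP [j2 _]; move: (partner_lt j2) k2n; lia.
by rewrite nth_uniq' // partner_neq.
Qed.

Definition Rf p f y := if y \in t then tau f y else p y.

Lemma Rf_inj p f : Qb p -> injective (Rf p f).
Proof.
move=> Hq y1 y2; rewrite /Rf.
case: (boolP (y1 \in t)) => h1; case: (boolP (y2 \in t)) => h2.
- exact: tau_inj.
- move=> E; move: (tau_in f h1); rewrite E Qb_in //; by rewrite (negbTE h2).
- move=> E; move: (tau_in f h2); rewrite -E Qb_in //; by rewrite (negbTE h1).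
- exact: perm_inj.
Qed.

Definition Rp p f : {perm U} :=
  (if Qb p as b return (b -> injective (Rf p f)) -> {perm U}
   then fun H => perm (H isT) else fun _ => 1%g) (@Rf_inj p f).

Lemma RpE p f : Qb p -> Rp p f =1 Rf p f.
Proof. rewrite /Rp; move: (@Rf_inj p f); case: (Qb p) => // H _ y; by rewrite permE. Qed.

Lemma Rp_graph p f : Qb p -> graph_perm adj (Rp p f).
Proof.
move=> Hq; apply/forallP => y; rewrite RpE // /Rf.
case: (boolP (y \in t)) => hy; last by case/andP: Hq => /forallP ->.
rewrite /tau; case: ifP => c; last by rewrite eqxx.
apply/orP; right.
set j := index y t.
have jn : (j < n)%N by rewrite idx_mem.
have y_eq : y = nth z t j by rewrite nth_index.
move: (c); rewrite /cond -/j => /andP [j2 _].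
rewrite {1}y_eq.
case: (boolP (odd j)) => oj.
- have e : partner j = j.-1 by rewrite /partner oj.
  have sce : sc j.-1 = j by rewrite /sc; case: eqP => ?; lia.
  rewrite e adj_sym; have := @Qb_adj p j.-1 Hq; rewrite sce; apply; lia.
- have e : partner j = sc j by rewrite /partner (negbTE oj) /sc; case: eqP => ?; move: k2n; lia.
  rewrite e; exact: (Qb_adj Hq jn).
Qed.

Lemma fnE f (i : 'I_k) : fn f i = f i.
Proof.
apply/existsP/idP => [[i' /andP [/eqP /val_inj -> //]]|gi]; by exists i; rewrite eqxx.
Qed.

Lemma Rp_inj p p' f f' : Qb p -> Qb p' -> Rp p f = Rp p' f' -> p = p' /\ f = f'.
Proof.
move=> Hq Hq' E.
have E' y : Rf p f y = Rf p' f' y by rewrite -!RpE // E.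
split.
- apply/permP => y; case: (boolP (y \in t)) => hy.
  + have jn : (index y t < n)%N by rewrite idx_mem.
    by rewrite -(nth_index z hy) !QbS.
  + by move: (E' y); rewrite /Rf (negbTE hy).
- apply/ffunP => i.
  have i2 : (i.*2 < n)%N by have := ltn_ord i; move: k2n; lia.
  have := E' (nth z t i.*2); rewrite /Rf mem_nth' // => Ei.
  have : cond f i.*2 = cond f' i.*2 by rewrite -!tau_nth // Ei.
  rewrite /cond doubleK.
  have -> : (i.*2 < k.*2)%N by rewrite ltn_double.
  by rewrite /= !fnE.
Qed.

Definition St := [set y | y \in t].
Definition H0 p := #|[set y | p y != y] :\: St|.

Lemma Hperm_split q : Hperm q = (#|[set y | q y != y] :&: St| + #|[set y | q y != y] :\: St|)%N.
Proof. by rewrite HpermE cardsID. Qed.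

Lemma Hp p : Qb p -> Hperm p = (n + H0 p)%N.
Proof.
move=> Hq; rewrite Hperm_split /H0; congr (_ + _)%N.
have -> : [set y | p y != y] :&: St = St.
  apply/setP => y; rewrite !inE; case: (boolP (y \in t)) => hy; rewrite ?andbT ?andbF //.
  have jn : (index y t < n)%N by rewrite idx_mem.
  by rewrite -(nth_index z hy) QbS // nth_uniq' ?sc_lt // sc_neq.
by rewrite cardsE -sizet; apply/card_uniqP.
Qed.

Lemma card_cond f : #|[set j : 'I_n | cond f j]| = (#|[set i | f i]|).*2.
Proof.
rewrite -!sum1dep_card !big_mkcond /=.
rewrite (eq_bigr (fun j : 'I_n => (cond f j : nat))); last by move=> j _; case: (cond f j).
rewrite -(big_mkord xpredT (fun j => (cond f j : nat))).
rewrite (big_cat_nat (leq0n _) k2n) /=.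
have -> : (\sum_(k.*2 <= i < n) (cond f i : nat))%N = 0%N.
  by rewrite big_nat_cond big1 // => j /andP [/andP [h _] _]; rewrite /cond ltnNge h.
rewrite addn0 (eq_big_nat _ _ (F2 := fun j => (fn f j./2 : nat))); last first.
  by move=> j /andP [_ h]; rewrite /cond h.
rewrite double_sum; congr (_.*2).
rewrite big_mkord [RHS]big_mkcond /=; apply: eq_bigr => i _; rewrite fnE; by case: (f i).
Qed.

Lemma HR p f : Qb p -> Hperm (Rp p f) = ((#|[set i | f i]|).*2 + H0 p)%N.
Proof.
move=> Hq; rewrite Hperm_split /H0; congr (_ + _)%N; last first.
  apply: eq_card => y; rewrite !inE RpE // /Rf; by case: (y \in t).
have -> : [set y | Rp p f y != y] :&: St = (fun j : 'I_n => nth z t j) @: [set j : 'I_n | cond f j].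
  apply/setP => y; rewrite !inE RpE // /Rf.
  case: (boolP (y \in t)) => hy /=; rewrite ?andbT ?andbF.
  - have jn : (index y t < n)%N by rewrite idx_mem.
    apply/idP/imsetP => [ne|[j]].
    + exists (Ordinal jn); last by rewrite /= nth_index.
      by rewrite inE -tau_nth //= nth_index.
    + by rewrite inE -tau_nth // => ne ->.
  - apply/esym/imsetP => [[j _ E]]; move: hy; by rewrite E mem_nth'.
rewrite card_imset ?card_cond //.
move=> i j E; apply/val_inj; exact: nth_inj (ltn_ord i) (ltn_ord j) E.
Qed.

Lemma wp (R : realType) (a : R) p : Qb p ->
  weight a p = expR (- a * n%:R) * expR (- a * (H0 p)%:R).
Proof. move=> Hq; by rewrite /weight Hp // natrD mulrDr expRD. Qed.

Lemma wR (R : realType) (a : R) p f : Qb p ->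
  weight a (Rp p f) = expR (- a * (H0 p)%:R) * expR (- (2 * a)) ^+ #|[set i | f i]|.
Proof.
move=> Hq; rewrite /weight HR // natrD mulrDr expRD mulrC; congr (_ * _).
rewrite -expRM_natl; congr expR; rewrite -mul2n natrM; ring.
Qed.

Lemma sumf (R : realType) (x : R) :
  \sum_(f : {ffun 'I_k -> bool}) x ^+ #|[set i | f i]| = (1 + x) ^+ k.
Proof.
have := (@bigA_distr_bigA R 0 1 *%R +%R 'I_k bool (fun i b => if b then x else 1)).
rewrite big_bool /= prodr_const card_ord addrC => ->.
apply: eq_bigr => f _; rewrite -big_mkcond /=.
rewrite (eq_bigl (mem [set i | f i])) ?prodr_const //.
by move=> i; rewrite !inE.
Qed.

Lemma peierls_t (R : realType) (a : R) (Q : pred {perm U}) : (forall p, Q p -> Qb p) ->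
  (1 + expR (- (2 * a))) ^+ k * \sum_(p | Q p) weight a p
    <= expR (- a * n%:R) * Zpart adj U a.
Proof.
move=> HQ.
have step1 : (1 + expR (- (2 * a))) ^+ k * \sum_(p | Q p) weight a p =
   expR (- a * n%:R) * \sum_(p | Q p) \sum_(f : {ffun 'I_k -> bool}) weight a (Rp p f).
  rewrite !mulr_sumr; apply: eq_bigr => p Qp.
  rewrite (eq_bigr (fun f : {ffun 'I_k -> bool} => expR (- a * (H0 p)%:R) * expR (- (2 * a)) ^+ #|[set i | f i]|)); last by move=> f _; rewrite wR ?HQ.
  rewrite -mulr_sumr sumf wp ?HQ //; ring.
rewrite step1 ler_wpM2l ?expR_ge0 // pair_big_dep /=.
apply: (@sum_inj_le R _ _ _ _ (fun pf => Rp pf.1 pf.2)).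
- by move=> q; rewrite /weight expR_ge0.
- move=> [p f] [p' f'] /andP [Qp _] /andP [Qp' _] /= E.
  by case: (Rp_inj (HQ _ Qp) (HQ _ Qp') E) => /= E1 E2; rewrite E1 E2.
- by move=> [p f] /andP [Qp _] /=; apply: Rp_graph; apply: HQ.
Qed.

End Comb.


Local Open Scope classical_set_scope.
Section SAPs.
Variables (V : choiceType) (adj : rel V) (o : V).
Variables (Nb : V -> seq V) (D : nat).
Hypothesis NbD : forall x, (size (Nb x) <= D)%N.
Hypothesis Nbadj : forall x y, adj x y -> y \in Nb x.
Hypothesis D1 : (1 <= D)%N.

Fixpoint Wl m x : seq (seq V) :=
  if m is m'.+1 then flatten [seq [seq y :: s | s <- Wl m' y] | y <- Nb x] else [:: [::]].

Lemma Wl_mem m x s : size s = m -> path adj x s -> s \in Wl m x.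
Proof.
elim: m x s => [|m IH] x [|y s] //=.
move=> [sz] /andP [axy ps]; apply/flattenP; exists [seq y :: s0 | s0 <- Wl m y].
  by apply/mapP; exists y => //; apply: Nbadj.
by rewrite mem_map ?IH // => a b [].
Qed.

Lemma Wl_size m x : (size (Wl m x) <= D ^ m)%N.
Proof.
elim: m x => [|m IH] x //=.
have H l : (sumn [seq size (Wl m y) | y <- l] <= size l * D ^ m)%N.
  by elim: l => //= y l IHl; rewrite mulSn leq_add.
rewrite size_flatten /shape -map_comp.
rewrite (eq_map (g := fun y => size (Wl m y))); last by move=> y /=; rewrite size_map.
by rewrite expnS; apply: leq_trans (H _) (leq_mul (NbD x) (leqnn _)).
Qed.

Lemma SAP_sub n : SAP adj o n.+1 `<=` [set` [seq o :: s | s <- Wl n o]].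
Proof.
move=> s [sz [hd [un cy]]].
case: s sz hd cy un => // x s [sz] /= hx; subst x => cy _.
rewrite /= mem_map; last by move=> a b [].
apply: Wl_mem => //; move: cy; rewrite /= rcons_path; by case/andP.
Qed.

Lemma SAP_fin n : finite_set (SAP adj o n).
Proof.
case: n => [|n]; first last. apply: (sub_finite_set (@SAP_sub n)). exact: finite_seq.
apply: (sub_finite_set _ (finite_seq [:: [::]])) => s [sz _].
by case: s sz.
Qed.

Lemma card_SAP_le n : (card_SAP adj o n <= D ^ n)%N.
Proof.
rewrite /card_SAP; case: n => [|n] //=.
apply: leq_trans (_ : size [seq o :: s | s <- Wl n o] <= _)%N; last first.
  rewrite size_map; apply: leq_trans (Wl_size n o) _; rewrite expnS leq_pmull //.
apply: uniq_leq_size; first exact: fset_uniq.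
move=> s; rewrite in_fset_set ?inE; last exact: SAP_fin.
move=> hs; exact: (SAP_sub hs).
Qed.
End SAPs.

Set Implicit Arguments. Unset Strict Implicit. Unset Printing Implicit Defensive.
Local Open Scope classical_set_scope.
Local Open Scope ring_scope.

Section Outer.
Variables (V : choiceType) (adj : rel V) (o : V).
Hypothesis adj_sym : forall x y, adj x y = adj y x.
Variable phi : V -> V.
Hypothesis phi_inj : injective phi.
Hypothesis phi_adj : forall a b, adj (phi a) (phi b) = adj a b.
Variables (U : {fset V}) (z : U).
Hypothesis phi_z : phi (val z) = o.
Hypothesis SAPfin : forall n, finite_set (SAP adj o n).

Definition An n := [pred p : {perm U} | graph_perm adj p && (cyc_len p z == n)].

Lemma An_props n p : (1 <= n)%N -> An n p ->
  [/\ p z != z, #|porbit p z| = n, uniq (traject p z n) & (2 <= n)%N].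
Proof.
move=> n1 /andP [gp]; rewrite /cyc_len; case: ifP => [_ /eqP e|pz /eqP e].
  by move: n1; rewrite -e.
have pz' : p z != z by rewrite pz.
split => //; first by rewrite -e; exact: uniq_traject_porbit.
case: n n1 e => [//|[|n]] // _ e.
by move: (iter_porbit p z) pz'; rewrite e /= => ->; rewrite eqxx.
Qed.

Lemma An_Qb n p : (1 <= n)%N -> An n p -> Qb adj z (traject p z n) n p.
Proof.
move=> n1 Ap; case: (An_props n1 Ap) => pz e un n2.
apply/andP; split; first by case/andP: Ap.
apply/forallP => j; rewrite nth_traject // /sc.
case: ifP => [/eqP jn|jn]; rewrite -iterS.
  by rewrite jn -e iter_porbit nth_traject ?e ?(ltnW n2).
rewrite nth_traject //; have := ltn_ord j; move/negbT: jn; lia.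
Qed.

Definition key n (p : {perm U}) : n.-tuple U := Tuple (introT eqP (size_traject p z n)).

Definition gmap (s : seq U) : seq V := map (fun u : U => phi (val u)) s.

Lemma gmap_inj : injective gmap.
Proof. apply: inj_map => a b /phi_inj; exact: val_inj. Qed.

Lemma cycle_traject n p : (1 <= n)%N -> An n p -> path.cycle (frel (p : U -> U)) (traject p z n).
Proof.
move=> n1 Ap; case: (An_props n1 Ap) => pz e un n2.
case: n n1 e un n2 Ap => // m _ e _ _ _.
have Hz : iter m.+1 p z = z by rewrite -e iter_porbit.
rewrite trajectS /=.
have -> : rcons (traject p (p z) m) z = traject p (p z) m.+1 by rewrite trajectSr -iterSr Hz.
exact: fpath_traject.
Qed.

Lemma key_SAP n p : (1 <= n)%N -> An n p -> SAP adj o n (gmap (key n p)).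
Proof.
move=> n1 Ap; case: (An_props n1 Ap) => pz e un n2.
have Q := An_Qb n1 Ap.
have sz : size (traject p z n) = n by rewrite size_traject.
rewrite /SAP /gmap /=; split; first by rewrite size_map size_traject.
split; first by case: n n1 {e un n2 Ap Q sz} => // m _ /=.
split; first by rewrite map_inj_uniq // => a b /phi_inj /val_inj.
rewrite cycle_map.
apply: (sub_in_cycle (P := mem (traject p z n)) _ _ (cycle_traject n1 Ap)); last first.
  by apply/allP.
move=> a b ha hb /= /eqP <-.
rewrite phi_adj.
have jn : (index a (traject p z n) < n)%N by rewrite -[X in (_ < X)%N]sz index_mem.
rewrite -(nth_index z ha) (QbS Q jn).
exact: (Qb_adj un sz n2 Q jn).
Qed.

Lemma count_keys n : (1 <= n)%N -> (#|key n @: [set p | An n p]| <= card_SAP adj o n)%N.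
Proof.
move=> n1; rewrite /card_SAP; case: eqP => [n0|_]; first by move: n1; rewrite n0.
rewrite cardE -(size_map (fun j : n.-tuple U => gmap j)).
apply: uniq_leq_size.
  rewrite map_inj_uniq ?enum_uniq // => j1 j2 /gmap_inj; exact: val_inj.
move=> s /mapP [j]; rewrite mem_enum => /imsetP [p]; rewrite inE => Ap -> ->.
rewrite in_fset_set // inE; exact: key_SAP.
Qed.

Lemma sum_An (R : realType) (a : R) n : (1 <= n)%N ->
  (1 + expR (- (2 * a))) ^+ n./2 * \sum_(p | An n p) weight a p
    <= (card_SAP adj o n)%:R * (expR (- a * n%:R) * Zpart adj U a).
Proof.
move=> n1.
have Z0 : 0 <= Zpart adj U a by apply: sumr_ge0 => p _; exact: expR_ge0.
rewrite (partition_big (key n) (mem (key n @: [set p | An n p]))) /=; last first.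
  by move=> p Ap; apply: imset_f; rewrite inE.
rewrite mulr_sumr.
apply: le_trans (_ : \sum_(j in key n @: [set p | An n p]) (expR (- a * n%:R) * Zpart adj U a) <= _).
  apply: ler_sum => j /imsetP [p0]; rewrite inE => Ap0 ->.
  case: (An_props n1 Ap0) => pz e un n2.
  apply: (peierls_t adj_sym un (size_traject _ _ _) n2).
  move=> p /andP [Ap /eqP kp].
  have : traject p z n = traject p0 z n by move: kp => /(congr1 val).
  move=> <-; exact: An_Qb.
rewrite sumr_const -(mulr_natl (expR _ * _)) ler_wpM2r ?mulr_ge0 ?expR_ge0 // ler_nat.
exact: count_keys.
Qed.
End Outer.

Set Implicit Arguments. Unset Strict Implicit. Unset Printing Implicit Defensive.
Local Open Scope classical_set_scope.
Local Open Scope ring_scope.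

Section Lim.
Variables (R : realType) (c : nat -> nat) (D : nat).
Hypothesis c0 : c 0%N = 1%N.
Hypothesis cD : forall n, (c n <= D ^ n)%N.
Hypothesis D1 : (1 <= D)%N.
Let u n : R := (c n)%:R `^ (n%:R^-1).

Lemma u_ge0 n : 0 <= u n. Proof. exact: powR_ge0. Qed.

Lemma u_pow n : (0 < n)%N -> u n ^+ n = (c n)%:R.
Proof.
move=> n0; rewrite /u -powR_mulrn ?powR_ge0 // -powRrM mulVf ?powRr1 //.
by rewrite pnatr_eq0 -lt0n.
Qed.

Lemma u_le n : u n <= D%:R.
Proof.
case: n => [|n].
  by rewrite /u c0 powR1 ler1n.
by rewrite -(ler_pXn2r (n:=n.+1)) // ?nnegrE ?u_ge0 // u_pow // -natrX ler_nat.
Qed.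

Lemma limsup_bound (A : R) : limn_sup u < A -> 0 < A ->
  exists C : R, 1 <= C /\ forall n, (c n)%:R <= C * A ^+ n.
Proof.
move=> muA A0.
have ub : has_ubound (range u) by exists D%:R => _ [n _ <-]; exact: u_le.
have lb : has_lbound (range u) by exists 0 => _ [n _ <-]; exact: u_ge0.
have bu : bounded_fun u.
  exists D%:R; split; first exact: num_real.
  move=> M DM x _ /=; rewrite ger0_norm ?u_ge0 //; exact: le_trans (u_le x) (ltW DM).
have cv := cvg_sups_inf ub lb.
rewrite -limn_supE // in cv.
have [N _ HN] := cvgr_lt _ cv _ muA.
have usup n : u n <= sups u n.
  rewrite /sups /=.
  have hb : has_ubound (sdrop u n) by exists D%:R => _ [k _ <-]; exact: u_le.
  have hn : sdrop u n (u n) by exists n => //=.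
  exact: (ub_le_sup hb hn).
exists (\sum_(i < N) (D%:R / A) ^+ i + 1); split.
  by rewrite lerDr sumr_ge0 // => i _; rewrite exprn_ge0 // divr_ge0 // ltW.
have C1 : 1 <= \sum_(i < N) (D%:R / A) ^+ i + 1.
  by rewrite lerDr sumr_ge0 // => i _; rewrite exprn_ge0 // divr_ge0 // ltW.
move=> n; case: (ltnP n N) => nN.
  apply: le_trans (_ : (D%:R / A) ^+ n * A ^+ n <= _).
    rewrite -exprMn divfK ?gt_eqF // -natrX ler_nat; exact: cD.
  rewrite ler_wpM2r ?exprn_ge0 ?(ltW A0) //.
  rewrite (bigD1 (Ordinal nN)) //= -addrA lerDl addr_ge0 ?sumr_ge0 // => i _.
  by rewrite exprn_ge0 // divr_ge0 // ltW.
case: n nN => [|n] nN.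
  by rewrite c0 expr0 mulr1.
rewrite -u_pow //.
apply: le_trans (_ : A ^+ n.+1 <= _); last by rewrite ler_peMl ?exprn_ge0 ?(ltW A0).
rewrite ler_pXn2r // ?nnegrE ?u_ge0 ?(ltW A0) //.
exact: le_trans (usup _) (ltW (HN _ nN)).
Qed.
End Lim.

Set Implicit Arguments. Unset Strict Implicit. Unset Printing Implicit Defensive.
Local Open Scope classical_set_scope.
Local Open Scope ring_scope.

Lemma geom_claim (R : realType) (r : R) l N :
  (1 - r) * \sum_(j < N) (if (l < j)%N then r ^+ j else 0) + r ^+ (maxn N l.+1) = r ^+ l.+1.
Proof.
elim: N => [|N IH]; first by rewrite big_ord0 mulr0 add0r max0n.
rewrite big_ord_recr /=; case: (ltnP l N) => lN.
  have -> : maxn N.+1 l.+1 = N.+1 by lia.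
  have e : maxn N l.+1 = N by lia.
  rewrite -IH e exprS; ring.
have -> : maxn N.+1 l.+1 = l.+1 by lia.
have e : maxn N l.+1 = l.+1 by lia.
by rewrite addr0 -[in RHS]IH e.
Qed.

Lemma geom (R : realType) (r : R) l N : 0 <= r -> r < 1 ->
  \sum_(j < N | (l < j)%N) r ^+ j <= r ^+ l / (1 - r).
Proof.
move=> r0 r1; rewrite ler_pdivlMr ?subr_gt0 // big_mkcond /= mulrC.
have := geom_claim r l N.
move=> E; apply: le_trans (_ : r ^+ l.+1 <= _).
  by rewrite -E lerDl exprn_ge0.
by rewrite exprS ler_piMl ?exprn_ge0 // ltW.
Qed.

Section Prob.
Variables (V : choiceType) (adj : rel V) (o : V).
Hypothesis adj_sym : forall x y, adj x y = adj y x.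
Variable phi : V -> V.
Hypothesis phi_inj : injective phi.
Hypothesis phi_adj : forall a b, adj (phi a) (phi b) = adj a b.
Variables (U : {fset V}) (z : U).
Hypothesis phi_z : phi (val z) = o.
Hypothesis SAPfin : forall n, finite_set (SAP adj o n).

Lemma Zpos (R : realType) (a : R) : 0 < Zpart adj U a.
Proof.
have g1 : graph_perm adj (1%g : {perm U}) by apply/forallP => x; rewrite perm1 eqxx.
rewrite /Zpart (bigD1 (1%g : {perm U})) //=.
apply: lt_le_trans (_ : 0 < weight a (1%g : {perm U})) _; first exact: expR_gt0.
rewrite lerDl sumr_ge0 // => p _; exact: expR_ge0.
Qed.

Lemma term_bound (R : realType) (a A C : R) j : 0 < A -> 0 <= C ->
  (forall n, (card_SAP adj o n)%:R <= C * A ^+ n) -> (1 <= j)%N ->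
  \sum_(p | An adj z j p) weight a p <=
    C * Num.sqrt (1 + expR (- (2 * a))) * (A / (expR a * Num.sqrt (1 + expR (- (2 * a))))) ^+ j
     * Zpart adj U a.
Proof.
move=> A0 C0 cb j1.
set x := expR (- (2 * a)); set b := Num.sqrt (1 + x); set E := expR a.
set S := \sum_(p | An adj z j p) weight a p.
have x0 : 0 <= x by exact: expR_ge0.
have b1 : 1 <= b by rewrite -sqrtr1 ler_sqrt ?lerDl // addr_ge0.
have b0 : 0 < b by exact: lt_le_trans ltr01 b1.
have E0 : 0 < E by exact: expR_gt0.
have S0 : 0 <= S by apply: sumr_ge0 => p _; exact: expR_ge0.
have Z0 := Zpos a.
have H := sum_An adj_sym phi_inj phi_adj phi_z SAPfin a j1.
rewrite -/x -/S in H.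
have H2 : b ^+ j.-1 * S <= C * A ^+ j * (expR (- a * j%:R) * Zpart adj U a).
  apply: le_trans (_ : (1 + x) ^+ j./2 * S <= _).
    rewrite ler_wpM2r // -(sqr_sqrtr (addr_ge0 ler01 x0)) -/b -exprM.
    apply: ler_weXn2l => //; lia.
  apply: le_trans H _; apply: ler_wpM2r; [by rewrite mulr_ge0 ?expR_ge0 ?(ltW Z0) | exact: cb].
have eE : expR (- a * j%:R) = E ^- j by rewrite mulrC expRM_natl expRN exprVn.
rewrite eE in H2.
have [i ei] : exists i, j = i.+1 by exists j.-1; lia.
rewrite ei /= in H2; rewrite ei.
rewrite -(ler_pM2l (exprn_gt0 i b0)); apply: le_trans H2 _.
rewrite le_eqVlt; apply/orP; left; apply/eqP.
rewrite expr_div_n exprMn /=.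
clearbody b E x S.
move: b b0 b1 => bb bb0 _.
have bn : bb != 0 by rewrite gt_eqF.
have en : E ^+ i.+1 != 0 by rewrite expf_neq0 ?gt_eqF.
have bin : bb ^+ i != 0 by rewrite expf_neq0 ?gt_eqF.
rewrite [bb ^+ i.+1]exprS [A ^+ i.+1]exprS.
move: en bin; set Ei := E ^+ i.+1; set Bi := bb ^+ i; set Ai := A ^+ i => en bin.
field. by rewrite bn en bin.
Qed.

Lemma prob_bound (R : realType) (a A C : R) l : 0 < A -> 0 <= C ->
  (forall n, (card_SAP adj o n)%:R <= C * A ^+ n) ->
  A / (expR a * Num.sqrt (1 + expR (- (2 * a)))) < 1 ->
  prob_cyc_gt adj a z l <=
   C * Num.sqrt (1 + expR (- (2 * a))) / (1 - A / (expR a * Num.sqrt (1 + expR (- (2 * a)))))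
     * (A / (expR a * Num.sqrt (1 + expR (- (2 * a))))) ^+ l.
Proof.
move=> A0 C0 cb r1.
set b := Num.sqrt _; set r := A / (expR a * b).
have b0 : 0 < b by rewrite sqrtr_gt0; apply: (lt_le_trans ltr01); rewrite lerDl expR_ge0.
have r0 : 0 <= r by rewrite divr_ge0 ?mulr_ge0 ?expR_ge0 ?(ltW A0) ?(ltW b0).
have Z0 := Zpos a.
rewrite /prob_cyc_gt ler_pdivrMr //.
pose M := #|{: U}|.+1.
have cl p : (cyc_len p z < M)%N.
  rewrite /cyc_len /M; case: ifP => // _; rewrite ltnS; exact: max_card.
rewrite (partition_big (fun p => (inord (cyc_len p z) : 'I_M)) (fun j : 'I_M => (l < j)%N)) /=; last first.
  by move=> p /andP [_ lc]; rewrite inordK.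
apply: le_trans (_ : \sum_(j < M | (l < j)%N) (C * b * r ^+ j * Zpart adj U a) <= _).
  apply: ler_sum => j lj.
  rewrite (eq_bigl (An adj z j)); last first.
    move=> p; rewrite /An /= -val_eqE /= inordK //.
    case: (boolP (cyc_len p z == j)) => e; rewrite ?andbT ?andbF //=.
    by move/eqP: e => ->; rewrite lj andbT.
  apply: term_bound => //; lia.
rewrite -big_distrl -big_distrr /= ler_wpM2r ?(ltW Z0) //.
rewrite -[C * b / (1 - r) * r ^+ l]mulrA [(1 - r)^-1 * _]mulrC ler_wpM2l ?mulr_ge0 ?(ltW b0) //.
exact: geom.
Qed.
End Prob.

Set Implicit Arguments. Unset Strict Implicit. Unset Printing Implicit Defensive.
Local Open Scope classical_set_scope.
Local Open Scope ring_scope.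

Section Beta.
Variable R : realType.
Definition bb (a : R) := Num.sqrt (1 + expR (- (2 * a))).
Definition beta (a : R) := expR a * bb a.

Lemma bb_ge1 a : 1 <= bb a.
Proof. rewrite /bb -[X in X <= _]sqrtr1 ler_sqrt ?lerDl ?expR_ge0 //; apply: addr_ge0 => //; exact: expR_ge0. Qed.
Lemma bb_gt0 a : 0 < bb a.
Proof. exact: lt_le_trans ltr01 (bb_ge1 a). Qed.
Lemma beta_gt0 a : 0 < beta a.
Proof. by rewrite /beta mulr_gt0 ?expR_gt0 ?bb_gt0. Qed.
Lemma beta_ge a : expR a <= beta a.
Proof. by rewrite /beta ler_peMr ?expR_ge0 ?bb_ge1. Qed.
Lemma bb_sq a : bb a ^+ 2 = 1 + expR (- (2 * a)).
Proof. by rewrite /bb sqr_sqrtr // addr_ge0 ?expR_ge0. Qed.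
Lemma beta_sq a : beta a ^+ 2 = expR (2 * a) + 1.
Proof.
rewrite /beta exprMn bb_sq -expRM_natl mulrDr mulr1 -expRD.
by rewrite (_ : 2%:R * a + - (2 * a) = 0) ?expR0 //; ring.
Qed.
Lemma beta_mono a1 a2 : a1 < a2 -> beta a1 < beta a2.
Proof.
move=> lt12; rewrite -(ltr_pXn2r (n := 2)) // ?nnegrE ?ltW ?beta_gt0 //.
by rewrite !beta_sq ltrD2r ltr_expR ltr_pM2l.
Qed.
Lemma ln_beta a : ln (beta a) = a + 2^-1 * ln (1 + expR (- (2 * a))).
Proof.
rewrite /beta lnM ?posrE ?expR_gt0 ?bb_gt0 // expRK; congr (_ + _).
rewrite -bb_sq lnXn ?bb_gt0 // -(mulr_natl (ln (bb a))) mulrA mulVf ?mul1r // pnatr_eq0.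
Qed.
Lemma bb_le2 a : 0 <= a -> bb a <= 2.
Proof.
move=> a0; rewrite -(ler_pXn2r (n := 2)) // ?nnegrE ?ltW ?bb_gt0 // bb_sq.
have : expR (- (2 * a)) <= 1 by rewrite -[X in _ <= X]expR0 ler_expR; lra.
lra.
Qed.
End Beta.

Unset Implicit Arguments.
Local Open Scope classical_set_scope.
Local Open Scope ring_scope.

Theorem theorem2p1 (R : realType) (V : choiceType) (adj : rel V) (o : V)
  (Hsimple : simple_graph adj) (Hinf : infinite_graph V)
  (Hbdd : bounded_degree adj) (Htrans : vertex_transitive adj)
  (alpha0 : R)
  (Halpha0 : alpha0 + 2^-1 * ln (1 + expR (- (2 * alpha0))) = ln (mu_G R adj o)) :
  exists C0 c0 : R -> R,
    (forall alpha : R, alpha0 < alpha ->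
       0 < C0 alpha /\ 0 < c0 alpha /\
       forall (U : {fset V}) (z : U) (l : nat),
         prob_cyc_gt adj alpha z l <= C0 alpha * expR (- (c0 alpha * l%:R)))
    /\ ((c0 x / x : R) @[x --> +oo] --> (1 : R))
    /\ (limf_esup (fun alpha => (C0 alpha)%:E) +oo%R < +oo)%E.
Proof.
have adj_sym : forall x y, adj x y = adj y x by case: Hsimple.
case: Hbdd => D HD.
case: (choice HD) => Nb HNb.
have NbD x : (size (Nb x) <= D.+1)%N by case: (HNb x) => /leqW.
have Nbadj x y : adj x y -> y \in Nb x by case: (HNb x) => _; apply.
have D1 : (1 <= D.+1)%N by [].
have SAPfin n := SAP_fin o Nbadj n.
have cle n := card_SAP_le o NbD Nbadj D1 n.
have cz : card_SAP adj o 0 = 1%N by [].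
pose mu := mu_G R adj o.
pose m := Num.max mu 0.
have m0 : 0 <= m by rewrite le_max lexx orbT.
have mum : mu <= m by rewrite le_max lexx.
pose A1 := m + 1.
pose Af a := if m + 2 < beta a then A1 else (m + beta a) / 2.
pose Cset A := [set C : R | 1 <= C /\ forall n, (card_SAP adj o n)%:R <= C * A ^+ n].
have Cex A : mu < A -> 0 < A -> exists C, Cset A C.
  by move=> muA A0; exact: (limsup_bound cz cle D1 muA A0).
pose Cf a := xget 0 (Cset (Af a)).
pose rf a := Af a / beta a.
pose c0f a := - ln (rf a).
pose C0f a := Cf a * bb a / (1 - rf a) + 1.
have key a : alpha0 < a -> mu < beta a.
  move=> a0; case: (lerP mu 0) => [mu0|mu0]; first exact: le_lt_trans mu0 (beta_gt0 a).
  have e : beta alpha0 = mu.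
    have : ln (beta alpha0) = ln mu by rewrite ln_beta Halpha0.
    by move/(congr1 expR); rewrite !lnK ?posrE ?beta_gt0.
  rewrite -e; exact: beta_mono.
have Afp a : mu < beta a -> [/\ mu < Af a, 0 < Af a & Af a < beta a].
  move=> mb; have bpos := beta_gt0 a.
  have mb' : m < beta a by rewrite gt_max mb bpos.
  rewrite /Af /A1; case: ifP => h; split; lra.
have bigfact a : Num.max 0 (ln (m + 2)) < a -> [/\ 0 < a, m + 2 < beta a & Af a = A1].
  rewrite gt_max => /andP [a0 la].
  have mb : m + 2 < beta a.
    apply: lt_le_trans (beta_ge a).
    rewrite -[X in X < _]lnK ?ltr_expR // posrE; lra.
  by split => //; rewrite /Af mb.
have A10 : 0 < A1 by rewrite /A1; lra.
exists C0f, c0f; split; [|split].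
- move=> a a0; have [muA A0 Ab] := Afp a (key a a0).
  have [C1 Cb] : Cset (Af a) (Cf a) := xgetPex 0 (Cex _ muA A0).
  have r0 : 0 < rf a by rewrite divr_gt0 ?beta_gt0.
  have r1 : rf a < 1 by rewrite ltr_pdivrMr ?beta_gt0 // mul1r.
  have X0 : 0 <= Cf a * bb a / (1 - rf a).
    by rewrite divr_ge0 ?mulr_ge0 ?subr_ge0 ?(ltW r1) ?(ltW (bb_gt0 a)) ?(le_trans ler01 C1).
  split; [|split].
  + by rewrite /C0f; apply: lt_le_trans ltr01 _; rewrite lerDr.
  + by rewrite /c0f oppr_gt0; apply: ln_lt0; rewrite r0 r1.
  + move=> U z l.
    have [phi [phib [phiadj phiz]]] := Htrans (val z) o.
    have phiinj := bij_inj phib.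
    have H := prob_bound adj_sym phiinj phiadj phiz SAPfin l A0 (le_trans ler01 C1) Cb r1.
    apply: le_trans H _.
    have -> : expR (- (c0f a * l%:R)) = rf a ^+ l.
      by rewrite /c0f mulNr opprK mulrC expRM_natl lnK ?posrE.
    apply: ler_wpM2r; first by rewrite exprn_ge0 ?(ltW r0).
    by rewrite /C0f lerDl.
- apply/cvgrPdist_lt => eps eps0.
  pose K := `|ln A1| + 1.
  exists (Num.max (Num.max 0 (ln (m + 2))) (K / eps)); split; first exact: num_real.
  move=> a; rewrite gt_max => /andP [Ta Ka].
  have [a0 mb AfE] := bigfact a Ta.
  have ce : c0f a = a + ln (bb a) - ln A1.
    rewrite /c0f /rf AfE lnM ?posrE ?invr_gt0 ?beta_gt0 // lnV ?posrE ?beta_gt0 //.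
    rewrite /beta lnM ?posrE ?expR_gt0 ?bb_gt0 // expRK; ring.
  have lb0 : 0 <= ln (bb a) := ln_ge0 (bb_ge1 a).
  have e2 : bb a <= expR 1.
    apply: le_trans (bb_le2 (ltW a0)) _; have := expR_ge1Dx (1:R); lra.
  have lb1 : ln (bb a) <= 1.
    by rewrite -[X in _ <= X](expRK 1) ler_ln ?posrE ?bb_gt0 ?expR_gt0.
  have -> : 1 - c0f a / a = (ln A1 - ln (bb a)) / a.
    by rewrite ce; field; rewrite gt_eqF.
  rewrite normf_div (gtr0_norm a0) ltr_pdivrMr //.
  apply: le_lt_trans (ler_normB _ _) _.
  rewrite (ger0_norm lb0).
  move: Ka; rewrite ltr_pdivrMr // /K => Ka.
  lra.
- rewrite limf_esupE.
  have [C1 _] : Cset A1 (xget 0 (Cset A1)).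
    by apply: xgetPex; apply: Cex => //; rewrite /A1; lra.
  set Cc := xget 0 (Cset A1).
  pose K2 := Cc * 2 * (A1 + 1) + 1.
  apply: (@le_lt_trans _ _ K2%:E); last by rewrite ltey.
  apply: ge_ereal_inf.
  exists (ereal_sup [set (C0f a)%:E | a in [set a | Num.max 0 (ln (m+2)) < a]]).
    exists [set a | Num.max 0 (ln (m+2)) < a] => //.
    exists (Num.max 0 (ln (m + 2))); split; first exact: num_real.
    by move=> a.
  apply: ge_ereal_sup => _ [a Ta <-]; rewrite lee_fin.
  have [a0 mb AfE] := bigfact a Ta.
  rewrite /C0f /Cf /rf AfE -/Cc lerD2r.
  have bpos := beta_gt0 a.
  have q1 : (A1 + 1) / beta a <= 1 by rewrite ler_pdivrMr // mul1r; rewrite /A1; lra.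
  have pos : 0 < 1 - A1 / beta a.
    by rewrite subr_gt0 ltr_pdivrMr // mul1r; rewrite /A1; lra.
  have hr : (1 - A1 / beta a)^-1 <= A1 + 1.
    rewrite -div1r ler_pdivrMr //.
    have -> : (A1 + 1) * (1 - A1 / beta a) = A1 + 1 - A1 * ((A1 + 1) / beta a).
      by field; rewrite gt_eqF.
    have : A1 * ((A1 + 1) / beta a) <= A1 * 1 by rewrite ler_wpM2l ?(ltW A10).
    lra.
  apply: ler_pM.
  + by rewrite mulr_ge0 ?(le_trans ler01 C1) ?(ltW (bb_gt0 a)).
  + by rewrite invr_ge0 ltW.
  + by rewrite ler_wpM2l ?(le_trans ler01 C1) ?bb_le2 ?ltW.
  + exact: hr.
Qed.
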